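(* Let $G$ be a group of order $k$. The ideal $I(G,* )$ of graded $*$-identities of $M_k(\mathbb{C})$ with the $G$-crossed-product grading and the transpose involution is generated as a $(T,* )$-ideal by the elements (1) $x_{i,e}x_{j,e}-x_{j,e}x_{i,e}$ for all $i,j\ge1$, and (2) $x_{i,e}-x_{i,e}^*$ for all $i\ge1$.
   Context: Let $G=\{g_1=e,\dots,g_k\}$ be a finite group of order $k$. Index rows/columns of $k\times k$ matrices by $G$, let $E_{a,b}$ be the matrix units, $P_g=\sum_{h\in G}E_{h,hg}$, and let $M_k(\mathbb{C})_g=\{DP_g: D\text{ diagonal}\}$ (the $G$-crossed-product grading); the involution $*$ is the transpose. $F=\mathbb{Q}\{x_{i,g},x^*_{i,g}: i\ge1,g\in G\}$ is the free associative algebra with involution $*$ (the anti-automorphism exchanging $x_{i,g}$ and $x^*_{i,g}$) and grading $\deg x_{i,g}=g$, $\deg x^*_{i,g}=g^{-1}$. $I(G,* )$ is the set of $f\in F$ vanishing under every substitution $x_{i,g}\mapsto A_{i,g}\in M_k(\mathbb{C})_g$, $x^*_{i,g}\mapsto A_{i,g}^T$. A $(T,* )$-ideal is an ideal of $F$ stable under $*$ and under every algebra endomorphism $\varphi$ of $F$ with $\varphi(x_{i,g})$ homogeneous of degree $g$ and $\varphi(x^*_{i,g})=\varphi(x_{i,g})^*$; the $(T,* )$-ideal generated by a set is the smallest $(T,* )$-ideal containing it. *)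

(* Defs.v *)
From HB Require Import structures.
From mathcomp Require Import all_boot all_order all_algebra all_fingroup all_field.
Set Implicit Arguments. Unset Strict Implicit. Unset Printing Implicit Defensive.
Import GRing.Theory Num.Theory.
Local Open Scope ring_scope.

Section FreeAlg.
Variable gT : finGroupType.

(* A letter (i, g, b): b = false is x_{i,g}, b = true is x*_{i,g}. *)
Definition letter := (nat * gT * bool)%type.
Definition word := seq letter.

Inductive term : Type :=
| TC of rat
| TV of letter
| TAdd of term & term
| TMul of term & term.

(* Coefficient of a word in the noncommutative polynomial denoted by a term;
   this identifies a term with an element of the free algebra Q<X>. *)
Fixpoint coef (t : term) : word -> rat :=
  match t with
  | TC c => fun w => if w is [::] then c else 0
  | TV l => fun w => (w == [:: l])%:R
  | TAdd a b => fun w => coef a w + coef b w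
  | TMul a b => fun w =>
      \sum_(k < (size w).+1) coef a (take k w) * coef b (drop k w)
  end.

Definition feq (s t : term) : Prop := forall w, coef s w = coef t w.

Fixpoint tstar (t : term) : term :=
  match t with
  | TC c => TC c
  | TV (i, g, b) => TV (i, g, ~~ b)
  | TAdd a b => TAdd (tstar a) (tstar b)
  | TMul a b => TMul (tstar b) (tstar a)
  end.

Definition ldeg (l : letter) : gT :=
  let: (i, g, b) := l in if b then (g^-1)%g else g.
Definition wdeg (w : word) : gT := foldr (fun l acc => (ldeg l * acc)%g) 1%g w.

Definition homogeneous (g : gT) (t : term) : Prop :=
  forall w, coef t w != 0 -> wdeg w = g.

Fixpoint tsubst (s : nat -> gT -> term) (t : term) : term :=
  match t with
  | TC c => TC c
  | TV (i, g, b) => if b then tstar (s i g) else s i g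
  | TAdd a b => TAdd (tsubst s a) (tsubst s b)
  | TMul a b => TMul (tsubst s a) (tsubst s b)
  end.

Definition graded_sub (s : nat -> gT -> term) : Prop :=
  forall i g, homogeneous g (s i g).

Definition is_TStar_ideal (P : term -> Prop) : Prop :=
  (forall f h, feq f h -> P f -> P h) /\
  P (TC 0) /\
  (forall f h, P f -> P h -> P (TAdd f h)) /\
  (forall f h, P f -> P (TMul h f) /\ P (TMul f h)) /\
  (forall f, P f -> P (tstar f)) /\
  (forall s, graded_sub s -> forall f, P f -> P (tsubst s f)).

Definition in_TStar_ideal_gen (S : term -> Prop) (f : term) : Prop :=
  forall P, is_TStar_ideal P -> (forall t, S t -> P t) -> P f.

Definition gens7 (t : term) : Prop :=
  (exists i j, t = TAdd (TMul (TV (i, 1%g, false)) (TV (j, 1%g, false)))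
                        (TMul (TC (-1)) (TMul (TV (j, 1%g, false)) (TV (i, 1%g, false)))))
  \/ (exists i, t = TAdd (TV (i, 1%g, false)) (TMul (TC (-1)) (TV (i, 1%g, true)))).

End FreeAlg.

Section Matrices.
Variables (gT : finGroupType) (C : numClosedFieldType).

Local Notation k := #|gT|.

(* Rows/columns indexed by G via enum_val : 'I_k -> gT.
   P_g = sum_h E_{h, hg}. *)
Definition Pmx (g : gT) : 'M[C]_k :=
  \matrix_(a, b) ((enum_val b == (enum_val a * g)%g)%:R : C).

Definition graded_comp (g : gT) (A : 'M[C]_k) : Prop :=
  exists d : 'rV[C]_k, A = diag_mx d *m Pmx g.

Fixpoint eval (A : nat -> gT -> 'M[C]_k) (t : term gT) : 'M[C]_k :=
  match t with
  | TC c => (ratr c)%:M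
  | TV (i, g, b) => if b then (A i g)^T else A i g
  | TAdd a b => eval A a + eval A b
  | TMul a b => eval A a *m eval A b
  end.

Definition gstar_identity (f : term gT) : Prop :=
  forall A : nat -> gT -> 'M[C]_k, (forall i g, graded_comp g (A i g)) -> eval A f = 0.

End Matrices.

(* Main.v *)
Require Import Defs.
From HB Require Import structures.
From mathcomp Require Import all_boot all_order all_algebra all_fingroup all_field.
Set Implicit Arguments. Unset Strict Implicit. Unset Printing Implicit Defensive.
Import GRing.Theory Num.Theory.
Local Open Scope ring_scope.
Section Words.
Variable gT : finGroupType.
Local Notation term := (term gT).
Local Notation word := (word gT).
Local Notation letter := (letter gT).
Implicit Types (t a b f h x : term) (w p q u v : word).

Definition wt (w : word) : term := foldr (fun l t => TMul (TV l) t) (TC gT 1) w.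

Definition isind (t : term) (u : word) := forall w, coef t w = (w == u)%:R.

Lemma take_drop_eq (w u v : word) k : (k <= size w)%N ->
  ((take k w == u) && (drop k w == v)) = ((w == u ++ v) && (k == size u)).
Proof.
move=> hk; apply/andP/andP => [[/eqP <- /eqP <-]|[/eqP -> /eqP ->]].
  by rewrite cat_take_drop size_takel.
by rewrite take_size_cat // drop_size_cat.
Qed.

Lemma ind_mul a b u v : isind a u -> isind b v -> isind (TMul a b) (u ++ v).
Proof.
move=> ha hb w /=.
under eq_bigr => k _ do rewrite ha hb -natrM mulnb take_drop_eq ?(leq_ord k) //.
case: eqP => [->|_].
  have hu : (size u < (size (u ++ v)).+1)%N by rewrite ltnS size_cat leq_addr.
  rewrite /= (bigD1 (Ordinal hu)) //= eqxx big1 ?addr0 // => i /eqP hi.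
  case: eqP => // hh; case: hi; exact: val_inj.
by rewrite big1.
Qed.

Lemma ind_TC : isind (TC gT 1) [::].
Proof. by case. Qed.

Lemma ind_TV l : isind (TV l) [:: l].
Proof. by []. Qed.

Lemma ind_wt w : isind (wt w) w.
Proof. elim: w => [|l w IH]; first exact: ind_TC. exact: (ind_mul (ind_TV l) IH). Qed.


Definition tsub (a b : term) : term := TAdd a (TMul (TC gT (-1)) b).

Lemma coef_TC c w : coef (TC gT c) w = if w is [::] then c else 0.
Proof. by []. Qed.

Lemma coef_scal c t w : coef (TMul (TC gT c) t) w = c * coef t w.
Proof.
rewrite /= big_ord_recl /= take0 drop0 big1 ?addr0 // => i _.
rewrite /bump /= add1n /=; case: w i => [|x w] i /=; [by case: i | exact: mul0r].
Qed.

Lemma feq_refl t : feq t t. Proof. by []. Qed.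
Lemma feq_sym (s : term) t : feq s t -> feq t s. Proof. by move=> h w; rewrite h. Qed.
Lemma feq_trans (s : term) t (u : term) : feq s t -> feq t u -> feq s u.
Proof. by move=> h1 h2 w; rewrite h1 h2. Qed.

Lemma feq_mul a a' b b' : feq a a' -> feq b b' -> feq (TMul a b) (TMul a' b').
Proof. by move=> h1 h2 w /=; apply: eq_bigr => k _; rewrite h1 h2. Qed.
Lemma feq_add a a' b b' : feq a a' -> feq b b' -> feq (TAdd a b) (TAdd a' b').
Proof. by move=> h1 h2 w /=; rewrite h1 h2. Qed.

Lemma coef_MulDr a b (c : term) w : coef (TMul a (TAdd b c)) w = coef (TMul a b) w + coef (TMul a c) w.
Proof. by rewrite /= -big_split; apply: eq_bigr => k _; rewrite mulrDr. Qed.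
Lemma coef_MulDl a b (c : term) w : coef (TMul (TAdd a b) c) w = coef (TMul a c) w + coef (TMul b c) w.
Proof. by rewrite /= -big_split; apply: eq_bigr => k _; rewrite mulrDl. Qed.
Lemma coef_MulSr a s b w : coef (TMul a (TMul (TC gT s) b)) w = s * coef (TMul a b) w.
Proof.
rewrite [in RHS]/= mulr_sumr; rewrite /=; apply: eq_bigr => k _.
by rewrite -/(coef (TMul (TC gT s) b) _) coef_scal mulrCA.
Qed.
Lemma coef_MulSl a s b w : coef (TMul (TMul (TC gT s) a) b) w = s * coef (TMul a b) w.
Proof.
rewrite [in RHS]/= mulr_sumr; rewrite /=; apply: eq_bigr => k _.
by rewrite -/(coef (TMul (TC gT s) a) _) coef_scal mulrA.
Qed.

Lemma coef_tsub a b w : coef (tsub a b) w = coef a w - coef b w.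
Proof. by rewrite /tsub /= -/(coef (TMul (TC gT (-1)) b) _) coef_scal mulN1r. Qed.

Lemma ind_feq a b u : isind a u -> isind b u -> feq a b.
Proof. by move=> h1 h2 w; rewrite h1 h2. Qed.

Lemma ind_wt_cat p q : feq (TMul (wt p) (wt q)) (wt (p ++ q)).
Proof. apply: ind_feq; [exact: ind_mul (ind_wt p) (ind_wt q)| exact: ind_wt]. Qed.

Definition inJ (f : term) := in_TStar_ideal_gen (@gens7 gT) f.

Lemma inJ_feq f h : feq f h -> inJ f -> inJ h.
Proof. move=> e hf P HP HS; case: (HP) => H1 _; exact: H1 _ _ e (hf P HP HS). Qed.
Lemma inJ_0 : inJ (TC gT 0).
Proof. by move=> P [_ [H _]]. Qed.
Lemma inJ_add f h : inJ f -> inJ h -> inJ (TAdd f h).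
Proof. move=> hf hh P HP HS; have [_ [_ [H _]]] := HP; apply: H; [exact: hf|exact: hh]. Qed.
Lemma inJ_mull f h : inJ f -> inJ (TMul h f).
Proof. move=> hf P HP HS; have [_ [_ [_ [H _]]]] := HP; exact: (H f h (hf P HP HS)).1. Qed.
Lemma inJ_mulr f h : inJ f -> inJ (TMul f h).
Proof. move=> hf P HP HS; have [_ [_ [_ [H _]]]] := HP; exact: (H f h (hf P HP HS)).2. Qed.
Lemma inJ_subst s f : graded_sub s -> inJ f -> inJ (tsubst s f).
Proof. move=> gs hf P HP HS; have [_ [_ [_ [_ [_ H]]]]] := HP; exact: H s gs f (hf P HP HS). Qed.
Lemma inJ_gen f : gens7 f -> inJ f.
Proof. by move=> hf P HP HS; apply: HS. Qed.

Lemma feq0 t : (forall w, coef t w = 0) -> feq t (TC gT 0).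
Proof. by move=> h w; rewrite h; case: w. Qed.

Definition weq (w w' : word) := inJ (tsub (wt w) (wt w')).

Lemma weq_refl w : weq w w.
Proof. apply: (inJ_feq _ inJ_0); apply: feq_sym; apply: feq0 => u; by rewrite coef_tsub subrr. Qed.

Lemma weq_sym w w' : weq w w' -> weq w' w.
Proof.
move=> h; apply: (inJ_feq _ (inJ_mull (TC gT (-1)) h)) => u.
by rewrite coef_scal !coef_tsub mulN1r opprB.
Qed.

Lemma weq_trans w1 w2 w3 : weq w1 w2 -> weq w2 w3 -> weq w1 w3.
Proof.
move=> h1 h2; apply: (inJ_feq _ (inJ_add h1 h2)) => u.
transitivity (coef (tsub (wt w1) (wt w2)) u + coef (tsub (wt w2) (wt w3)) u); first by [].
by rewrite !coef_tsub addrA subrK.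
Qed.

Lemma coef_ctx a b b' (c : term) w :
  coef (TMul (TMul a (tsub b b')) c) w = coef (TMul (TMul a b) c) w - coef (TMul (TMul a b') c) w.
Proof.
have e : feq (TMul a (tsub b b')) (TAdd (TMul a b) (TMul (TC gT (-1)) (TMul a b'))).
  by move=> v; rewrite /tsub coef_MulDr coef_MulSr /= -/(coef (TMul (TC gT (-1)) (TMul a b')) v) coef_scal.
rewrite (feq_mul e (feq_refl c)) coef_MulDl coef_MulSl mulN1r.
by [].
Qed.

Lemma weq_ctx p q (c c' : word) : weq c c' -> weq (p ++ c ++ q) (p ++ c' ++ q).
Proof.
move=> h; have := inJ_mulr (wt q) (inJ_mull (wt p) h); apply: inJ_feq => u.
rewrite coef_ctx coef_tsub.
have i1 := ind_mul (ind_mul (ind_wt p) (ind_wt c)) (ind_wt q).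
have i2 := ind_mul (ind_mul (ind_wt p) (ind_wt c')) (ind_wt q).
by rewrite i1 i2 !ind_wt !catA.
Qed.

Definition flipl (l : letter) : letter := let: (i, g, b) := l in (i, g, ~~ b).
Definition wstar w : word := rev (map flipl w).
Lemma wstar_cons l w : wstar (l :: w) = wstar w ++ [:: flipl l].
Proof. by rewrite /wstar /= rev_cons cats1. Qed.
Lemma wstar_cat u v : wstar (u ++ v) = wstar v ++ wstar u.
Proof. by rewrite /wstar map_cat rev_cat. Qed.
Lemma flipl_ldeg l : ldeg (flipl l) = (ldeg l)^-1%g.
Proof. by case: l => [[i g] []] /=; rewrite ?invgK. Qed.
Lemma flipl_invol l : flipl (flipl l) = l.
Proof. by case: l => [[i g] b] /=; rewrite negbK. Qed.

Lemma wdeg_cons l w : wdeg (l :: w) = (ldeg l * wdeg w)%g.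
Proof. by []. Qed.
Lemma wdeg_cat u v : wdeg (u ++ v) = (wdeg u * wdeg v)%g.
Proof. elim: u => [|l u IH] /=; first by rewrite mul1g. by rewrite IH mulgA. Qed.
Lemma wdeg_wstar w : wdeg (wstar w) = (wdeg w)^-1%g.
Proof.
elim: w => [|l w IH]; first by rewrite /= invg1.
by rewrite wstar_cons wdeg_cat IH /= flipl_ldeg mulg1 invMg.
Qed.

Lemma ind_tstar w : isind (tstar (wt w)) (wstar w).
Proof.
elim: w => [|l w IH]; first exact: ind_TC.
rewrite wstar_cons /=; case: l => [[i g] b] /=; exact: ind_mul IH (ind_TV _).
Qed.

Lemma weq_rev c : wdeg c = 1%g -> weq c (wstar c).
Proof.
move=> hc.
pose t0 := TAdd (TV (0%N, 1%g, false)) (TMul (TC gT (-1)) (TV (0%N, 1%g, true))).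
have g0 : gens7 t0 by right; exists 0%N.
pose s := fun (i : nat) (g : gT) => if g == 1%g then wt c else TC gT 0.
have gs : graded_sub s.
  move=> i g w; rewrite /s; have [->|ng] := eqVneq g 1%g.
    rewrite ind_wt; have [-> //|nw] := eqVneq w c; by rewrite eqxx.
  by rewrite coef_TC; case: w => [|? ?]; rewrite eqxx.
have := inJ_subst gs (inJ_gen g0); apply: inJ_feq.
rewrite /= /s eqxx; apply: feq_add => //; apply: feq_mul => //.
exact: ind_feq (ind_tstar c) (ind_wt _).
Qed.

End Words.
Section Combi.
Variable gT : finGroupType.
Local Notation term := (term gT).
Local Notation word := (word gT).
Local Notation letter := (letter gT).
Implicit Types (w p q u v : word) (a x y : gT).

Definition edge := (nat * gT * gT)%type.
Definition step a (l : letter) : gT := (a * ldeg l)%g.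
Definition ledge a (l : letter) : edge :=
  let: (i, g, b) := l in if b then (i, g, a * g^-1)%g else (i, g, a).
Fixpoint edges a w : seq edge :=
  if w is l :: w' then ledge a l :: edges (step a l) w' else [::].
Fixpoint verts a w : seq gT :=
  if w is l :: w' then a :: verts (step a l) w' else [:: a].
Definition esrc (e : edge) : gT := e.2.
Definition edst (e : edge) : gT := (e.2 * e.1.2)%g.
Definition touches (X : seq gT) (e : edge) := (esrc e \in X) || (edst e \in X).
Definition inside (X : seq gT) (e : edge) := (esrc e \in X) && (edst e \in X).

Lemma size_edges a w : size (edges a w) = size w.
Proof. by elim: w a => [|l w IH] a //=; rewrite IH. Qed.

Lemma step_cat a w : (a * wdeg w)%g = foldl step a w.
Proof. by elim: w a => [|l w IH] a /=; rewrite ?mulg1 // -IH /step mulgA. Qed.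

Lemma edges_cat a u v : edges a (u ++ v) = edges a u ++ edges (a * wdeg u)%g v.
Proof.
elim: u a => [|l u IH] a /=; first by rewrite mulg1.
by rewrite IH /step mulgA.
Qed.

Lemma ledge_flip a l : ledge (step a l) (flipl l) = ledge a l.
Proof. by case: l => [[i g] []] /=; rewrite /step /= ?mulgK ?mulgKV. Qed.

Lemma edges_wstar a w : edges (a * wdeg w)%g (wstar w) = rev (edges a w).
Proof.
elim: w a => [|l w IH] a //=.
rewrite wstar_cons edges_cat rev_cons -cats1 mulgA IH.
by rewrite wdeg_wstar mulgK /= -/(step a l) ledge_flip.
Qed.

Lemma ledge_touch X a l : touches X (ledge a l) = (a \in X) || (step a l \in X).
Proof. by case: l => [[i g] []]; rewrite /touches /esrc /edst /step /= ?mulgKV // orbC. Qed.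
Lemma ledge_inside X a l : inside X (ledge a l) = (a \in X) && (step a l \in X).
Proof. by case: l => [[i g] []]; rewrite /inside /esrc /edst /step /= ?mulgKV // andbC. Qed.

Lemma ledge_eq x m a l : ledge x m = ledge a l ->
  (m = l /\ x = a) \/ (m = flipl l /\ x = step a l).
Proof.
case: m => [[i' g'] b']; case: l => [[i g] b]; rewrite /step /=.
case: b'; case: b => -[-> -> e].
- by left; split => //; move/mulIg: e.
- by right; split => //; rewrite -e mulgKV.
- by right; split.
- by left.
Qed.

Definition R w w' := weq w w' /\ wdeg w = wdeg w' /\ forall a, perm_eq (edges a w) (edges a w').

Lemma R_refl w : R w w.
Proof. by split; [exact: weq_refl|split]. Qed.
Lemma R_sym w w' : R w w' -> R w' w.
Proof. by case=> [h1 [h2 h3]]; split; [exact: weq_sym|split=> // a; rewrite perm_sym]. Qed.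
Lemma R_trans w1 w2 w3 : R w1 w2 -> R w2 w3 -> R w1 w3.
Proof.
case=> [h1 [h2 h3]] [k1 [k2 k3]]; split; first exact: weq_trans h1 k1.
by split; [rewrite h2|move=> a; apply: perm_trans (h3 a) (k3 a)].
Qed.

Lemma R_rev p c q : wdeg c = 1%g -> R (p ++ c ++ q) (p ++ wstar c ++ q).
Proof.
move=> hc; split; first exact: weq_ctx (weq_rev hc).
split; first by rewrite !wdeg_cat wdeg_wstar hc invg1.
move=> a; rewrite !edges_cat !wdeg_wstar hc invg1.
have := edges_wstar (a * wdeg p)%g c; rewrite hc mulg1 => ->.
by rewrite perm_cat2l perm_cat2r perm_sym perm_rev.
Qed.

Lemma edges_split a w e : e \in edges a w ->
  exists p m q, w = p ++ m :: q /\ ledge (a * wdeg p)%g m = e.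
Proof.
elim: w a => [|l w IH] a //=; rewrite inE => /orP [/eqP ->|/IH [p [m [q [-> he]]]]].
  by exists [::], l, w; rewrite mulg1.
by exists (l :: p), m, q; split => //; rewrite /= mulgA.
Qed.

Lemma verts_split a w y : y \in verts a w -> exists p q, w = p ++ q /\ y = (a * wdeg p)%g.
Proof.
elim: w a => [|l w IH] a /=.
  by rewrite inE => /eqP ->; exists [::], [::]; rewrite mulg1.
rewrite inE => /orP [/eqP ->|/IH [p [q [-> hy]]]].
  by exists [::], (l :: w); rewrite mulg1.
by exists (l :: p), q; split => //; rewrite hy /= mulgA.
Qed.

Lemma verts_head a w : a \in verts a w.
Proof. by case: w => [|? ?]; rewrite /= inE eqxx. Qed.

Lemma edges_verts a w e : e \in edges a w -> inside (verts a w) e.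
Proof.
elim: w a => [|l w IH] a //=; rewrite inE => /orP [/eqP ->|/IH].
  by rewrite ledge_inside !inE eqxx verts_head orbT.
by rewrite /inside !inE => /andP [-> ->]; rewrite !orbT.
Qed.

Lemma walk_cross X x w : x \notin X -> (exists2 e, e \in edges x w & touches X e) ->
  exists2 e, e \in edges x w & touches X e && ~~ inside X e.
Proof.
elim: w x => [|l w IH] x hx [e] //=; rewrite inE.
case hs: (step x l \in X).
  move=> _ _; exists (ledge x l); first by rewrite inE eqxx.
  by rewrite ledge_touch ledge_inside hs (negbTE hx) orbT.
case/orP => [/eqP ->|he ht]; first by rewrite ledge_touch hs (negbTE hx).
have [e' he' ht'] := IH (step x l) (negbT hs) (ex_intro2 _ _ e he ht).
by exists e' => //; rewrite inE he' orbT.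
Qed.

Lemma opp_case a l p q : (a * wdeg p)%g = step a l -> R (p ++ flipl l :: q) (l :: (wstar p ++ q)).
Proof.
move=> h; have hp : wdeg p = ldeg l by move: h; rewrite /step => /mulgI.
have hc : wdeg (p ++ [:: flipl l]) = 1%g by rewrite wdeg_cat hp /= flipl_ldeg mulg1 mulgV.
have := R_rev [::] q hc; rewrite /= -catA /= wstar_cat /=.
by rewrite /wstar /= flipl_invol.
Qed.

Lemma perm_mid (T : eqType) (x : T) s s1 s2 : perm_eq (x :: s) (s1 ++ x :: s2) -> perm_eq s (s1 ++ s2).
Proof.
move=> h; have: perm_eq (x :: s) (x :: (s1 ++ s2)).
  by apply: perm_trans h _; rewrite -cat1s perm_catCA.
by rewrite perm_cons.
Qed.

Lemma reduce a l w1 w' : perm_eq (edges a (l :: w1)) (edges a w') -> exists w1', R w' (l :: w1').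
Proof.
move=> h.
have hE : ledge a l \in edges a w' by rewrite -(perm_mem h) inE eqxx.
have [p [m [q [hw' he]]]] := edges_split hE.
case: (ledge_eq he) => [[em hx]|[em hx]]; subst m; last first.
  by exists (wstar p ++ q); rewrite hw'; apply: (opp_case q hx).
have hp : wdeg p = 1%g by move: hx; rewrite -{2}(mulg1 a) => /mulgI.
clear he hE; case: p hw' hx hp => [|m0 p0] hw' hx hp.
  by exists q; rewrite hw'; exact: R_refl.
set p := m0 :: p0 in hw' hx hp *.
case hh: (has (fun y => y \in verts (step a l) q) (verts a p)).
  have [y hy1 hy2] := hasP hh.
  have [p1 [p2 [ep ey1]]] := verts_split hy1.
  have [q1 [q2 [eq ey2]]] := verts_split hy2.
  have h1 : wdeg p1 = (ldeg l * wdeg q1)%g.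
    by move: ey2; rewrite ey1 /step -mulgA => /mulgI.
  have h2 : wdeg p2 = (wdeg p1)^-1%g.
    by apply/eqP; rewrite eq_sym eq_invg_mul -wdeg_cat -ep hp.
  have hc : wdeg (p2 ++ l :: q1) = 1%g by rewrite wdeg_cat wdeg_cons h2 h1 mulVg.
  have r1 := R_rev p1 q2 hc.
  rewrite wstar_cat wstar_cons -!catA /= in r1.
  have r2 := opp_case (p := p1 ++ wstar q1) (wstar p2 ++ q2) (_ : (a * wdeg (p1 ++ wstar q1))%g = step a l).
  exists (wstar (p1 ++ wstar q1) ++ wstar p2 ++ q2).
  rewrite hw' ep eq -!catA /=; apply: R_trans r1 _.
  rewrite -catA in r2; apply: r2.
  by rewrite wdeg_cat wdeg_wstar h1 !mulgA mulgK.
exfalso.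
have hperm : perm_eq (edges (step a l) w1) (edges a p ++ edges (step a l) q).
  move: h; rewrite hw' edges_cat hx /= => h0.
  exact: (@perm_mid _ _ _ (ledge a m0 :: edges (step a m0) p0) _ h0).
have hnot : forall y, y \in verts (step a l) q -> y \notin verts a p.
  move=> y hy; apply/negP => hy'; move/negP: hh; apply; apply/hasP; by exists y.
have hsX : step a l \notin verts a p by apply: hnot; exact: verts_head.
have [|e he /andP [ht hi]] := walk_cross (w := w1) hsX.
  have hin : ledge a m0 \in edges a p by rewrite /= inE eqxx.
  exists (ledge a m0); first by rewrite (perm_mem hperm) mem_cat hin.
  by have := edges_verts hin; rewrite /inside /touches => /andP [-> _].
move: he; rewrite (perm_mem hperm) mem_cat => /orP [he|he].
  by move: hi; rewrite edges_verts.
move: ht; have := edges_verts he; rewrite /inside /touches => /andP [s1 s2].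
by rewrite (negbTE (hnot _ s1)) (negbTE (hnot _ s2)).
Qed.

Lemma R_cons l w w' : R w w' -> R (l :: w) (l :: w').
Proof.
case=> [h1 [h2 h3]]; split.
  by have := weq_ctx [:: l] [::] h1; rewrite !cats0.
by split; [rewrite /= h2 | move=> a /=; rewrite perm_cons].
Qed.

Lemma main_combi n : forall a w w', size w = n -> perm_eq (edges a w) (edges a w') -> R w w'.
Proof.
elim: n => [|n IH] a w w'.
  case: w => // _ h; have := perm_size h; rewrite size_edges /=.
  by case: w' {h} => // _; exact: R_refl.
case: w => // l w1 [hs] h.
have [w1' r] := reduce h.
have h' : perm_eq (edges (step a l) w1) (edges (step a l) w1').
  by rewrite -(perm_cons (ledge a l)); exact: perm_trans h (proj2 (proj2 r) a).
exact: R_trans (R_cons l (IH _ _ _ hs h')) (R_sym r).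
Qed.

End Combi.
Section Indep.
Variable (R : numDomainType) (X : eqType).

Lemma poly_vanish n (c : nat -> R) :
  (forall z : R, \sum_(d < n) c d * z ^+ d = 0) -> forall d, c d = 0 \/ (n <= d)%N.
Proof.
move=> h d; case: (ltnP d n) => hd; last by right.
left; pose p := \poly_(i < n) c i.
have p0 : p = 0.
  apply/eqP; apply: contraT => pn0.
  have := max_poly_roots pn0 (rs := [seq i%:R | i <- iota 0 n]).
  have -> : all (root p) [seq i%:R | i <- iota 0 n].
    by apply/allP => z _; rewrite /root horner_poly h.
  rewrite map_inj_uniq ?iota_uniq; last by move=> i j /eqP; rewrite eqr_nat => /eqP.
  move=> /(_ isT isT); rewrite size_map size_iota => /leq_trans/(_ (size_poly _ _)).
  by rewrite ltnn.
by have := congr1 (fun q : {poly R} => q`_d) p0; rewrite coef_poly hd coef0.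
Qed.

Definition meas (L : seq (R * seq X)) := (\sum_(j <- L) size j.2)%N.

Lemma prod_split (tau : X -> R) x z s :
  \prod_(y <- s) (if y == x then z else tau y) =
  z ^+ count_mem x s * \prod_(y <- [seq y <- s | y != x]) tau y.
Proof.
elim: s => [|y s IH]; first by rewrite !big_nil mulr1.
rewrite /= big_cons IH; case: eqP => [->|ny] /=.
  by rewrite exprS mulrA.
by rewrite big_cons mulrCA.
Qed.

Lemma filter_pred1_nseq (s : seq X) x : [seq y <- s | y == x] = nseq (count_mem x s) x.
Proof. elim: s => [|y s IH] //=; case: eqP => [->|] //=; by rewrite IH. Qed.

Lemma perm_split (s m : seq X) x :
  perm_eq s m = (count_mem x s == count_mem x m) &&
                perm_eq [seq y <- s | y != x] [seq y <- m | y != x].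
Proof.
apply/idP/andP => [h|[/eqP hc hf]].
  by split; [apply/eqP; exact: (seq.permP h) | exact: perm_filter].
have e : forall t : seq X, perm_eq t (nseq (count_mem x t) x ++ [seq y <- t | y != x]).
  move=> t; rewrite -filter_pred1_nseq perm_sym.
  have := perm_filterC (pred1 x) t => /permPl; apply: perm_trans.
  by apply/permPl.
have e1 := e s; have e2 := e m; rewrite hc in e1.
apply: perm_trans e1 _; rewrite perm_sym; apply: perm_trans e2 _.
by rewrite perm_cat2l perm_sym.
Qed.

Lemma sum_nat_pos (L : seq (R * seq X)) (f : R * seq X -> nat) j0 :
  j0 \in L -> (0 < f j0)%N -> (0 < \sum_(j <- L) f j)%N.
Proof.
elim: L => [|j L IH] //; rewrite inE big_cons => /orP [/eqP <- h|h1 h2].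
  by rewrite ltn_addr.
by rewrite ltn_addl // IH.
Qed.

Lemma meas_ge j L : j \in L -> (size j.2 <= meas L)%N.
Proof.
elim: L => [|j' L IH] //; rewrite inE /meas big_cons => /orP [/eqP <-|h].
  exact: leq_addr.
by apply: leq_trans (IH h) _; rewrite leq_addl.
Qed.

Lemma all_empty (L : seq (R * seq X)) :
  (forall j, j \in L -> j.2 = [::]) ->
  (forall tau : X -> R, \sum_(j <- L) j.1 * \prod_(y <- j.2) tau y = 0) ->
  forall m, \sum_(j <- L | perm_eq j.2 m) j.1 = 0.
Proof.
move=> e H m.
have s0 : \sum_(j <- L) j.1 = 0.
  transitivity (\sum_(j <- L) j.1 * \prod_(y <- j.2) (fun _ => 0 : R) y); last exact: H.
  rewrite !big_seq; apply: eq_bigr => j /e ->; by rewrite big_nil mulr1.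
case: m => [|y m].
  rewrite big_seq_cond; transitivity (\sum_(j <- L) j.1); last exact: s0.
  rewrite [RHS]big_seq; apply: eq_bigl => j.
  by apply/andP/idP => [[]//|hj]; split => //; rewrite (e j hj).
rewrite big_seq_cond big1 // => j /andP [/e ->].
by move=> /perm_size.
Qed.

Lemma indep N : forall L : seq (R * seq X), (meas L <= N)%N ->
  (forall tau : X -> R, \sum_(j <- L) j.1 * \prod_(y <- j.2) tau y = 0) ->
  forall m, \sum_(j <- L | perm_eq j.2 m) j.1 = 0.
Proof.
elim: N => [|N IH] L hN H m.
  apply: all_empty H m => j /meas_ge h; apply/eqP; rewrite -size_eq0 -leqn0.
  exact: leq_trans h hN.
case hh: (has (fun j : R * seq X => j.2 != [::]) L); last first.
  apply: all_empty H m => j hj; apply/eqP; apply: contraFT hh => hne.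
  by apply/hasP; exists j.
have [j0 hj0 hne] := hasP hh.
case e0 : j0.2 hne => [|x t] // _.
pose cnt (j : R * seq X) := count_mem x j.2.
have hcnt : forall j, j \in L -> (cnt j < N.+2)%N.
  move=> j /meas_ge h; rewrite ltnS; apply: leq_trans (count_size _ _) _.
  exact: leq_trans h hN.
pose Ld d := [seq (j.1, [seq y <- j.2 | y != x]) | j <- L & cnt j == d].
have hm : forall d, (meas (Ld d) <= N)%N.
  move=> d; rewrite /meas big_map big_filter /=.
  apply: (@leq_trans (\sum_(j <- L) size [seq y <- j.2 | y != x])%N).
    by rewrite big_mkcond /=; apply: leq_sum => j _; case: ifP.
  have hsplit : (\sum_(j <- L) size [seq y <- j.2 | y != x] + \sum_(j <- L) cnt j = meas L)%N.
    rewrite -big_split /meas; apply: eq_bigr => j _.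
    change (size [seq y <- j.2 | y != x] + cnt j = size j.2)%N; rewrite size_filter /cnt addnC.
    by rewrite -(count_predC (pred1 x)); congr (_ + _)%N; apply: eq_count.
  have hpos : (0 < \sum_(j <- L) cnt j)%N.
    by apply: (sum_nat_pos (f := cnt) hj0); rewrite /cnt e0 /= eqxx.
  rewrite -ltnS; apply: leq_trans hN; rewrite -hsplit.
  by rewrite -[X in (X < _)%N]addn0 ltn_add2l.
have hv : forall d (tau : X -> R), \sum_(j <- Ld d) j.1 * \prod_(y <- j.2) tau y = 0.
  move=> d tau.
  pose c (d' : nat) := \sum_(j <- L | cnt j == d') j.1 * \prod_(y <- [seq y <- j.2 | y != x]) tau y.
  have -> : \sum_(j <- Ld d) j.1 * \prod_(y <- j.2) tau y = c d by rewrite big_map big_filter.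
  have hz : forall z, \sum_(d' < N.+2) c d' * z ^+ d' = 0.
    move=> z; apply: etrans (H (fun y => if y == x then z else tau y)).
    under [RHS]eq_bigr => j _ do rewrite prod_split.
    transitivity (\sum_(j <- L) \sum_(d' < N.+2)
       (if cnt j == d' then j.1 * (z ^+ cnt j * \prod_(y <- [seq y <- j.2 | y != x]) tau y) else 0)).
      rewrite exchange_big /=; apply: eq_bigr => d' _; rewrite /c mulr_suml big_mkcond /=.
      apply: eq_bigr => j _; case: eqP => [e|] //; rewrite -e.
      by rewrite -mulrA (mulrC _ (z ^+ _)).
    rewrite big_seq [RHS]big_seq; apply: eq_bigr => j hj; rewrite -big_mkcond /=.
    rewrite (eq_bigl (fun d' : 'I_N.+2 => d' == cnt j :> nat)); last by move=> d'; exact: eq_sym.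
    by rewrite (@big_ord1_eq _ _ _ (fun _ => j.1 * (z ^+ cnt j * \prod_(y <- [seq y <- j.2 | y != x]) tau y))) hcnt.
  have [-> //|hd] := poly_vanish hz d.
  rewrite /c big_seq_cond big1 // => j /andP [hj /eqP hc].
  by have := hcnt j hj; rewrite hc => /leq_trans/(_ hd); rewrite ltnn.
have := IH (Ld (cnt (0, m))) (hm _) (hv _) [seq y <- m | y != x].
rewrite big_map big_filter_cond /= => h; apply: etrans h.
by apply: eq_bigl => j; rewrite (perm_split _ _ x).
Qed.

End Indep.
Section Expand.
Variable gT : finGroupType.
Local Notation term := (term gT).
Local Notation word := (word gT).
Implicit Types (t a b f : term) (w u v : word).

Fixpoint supp t : seq word :=
  match t with
  | TC _ => [:: [::]]
  | TV l => [:: [:: l]]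
  | TAdd a b => supp a ++ supp b
  | TMul a b => [seq u ++ v | u <- supp a, v <- supp b]
  end.

Lemma notin_supp t w : w \notin supp t -> coef t w = 0.
Proof.
elim: t w => [c|l|a IHa b IHb|a IHa b IHb] w /=.
- by rewrite inE; case: w.
- by rewrite inE => /negbTE ->.
- by rewrite mem_cat negb_or => /andP [/IHa -> /IHb ->]; rewrite addr0.
- move=> hw; rewrite big1 // => k _.
  have [ha|/IHa -> ] := boolP (take k w \in supp a); last by rewrite mul0r.
  have [hb|/IHb -> ] := boolP (drop k w \in supp b); last by rewrite mulr0.
  by have := allpairs_f (fun x y => x ++ y) ha hb; rewrite cat_take_drop (negbTE hw).
Qed.

Lemma sum_ind (V : zmodType) (S : seq word) (F : word -> V) x : uniq S ->
  (forall w, w != x -> F w = 0) -> \sum_(w <- S) F w = if x \in S then F x else 0.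
Proof.
move=> uS h; case: ifP => hx.
  rewrite (bigD1_seq x) //= big1 ?addr0 // => w; exact: h.
rewrite big_seq big1 // => w hw; apply: h; apply: contraFN hx => /eqP <-; exact: hw.
Qed.

Lemma reindex (V : zmodType) (F : word -> word -> V) Sa Sb S :
  uniq S -> uniq Sa -> uniq Sb -> (forall u v, F u v != 0 -> (u \in Sa) && (v \in Sb)) ->
  (forall u v, u \in Sa -> v \in Sb -> u ++ v \in S) ->
  \sum_(w <- S) \sum_(k < (size w).+1) F (take k w) (drop k w) =
  \sum_(u <- Sa) \sum_(v <- Sb) F u v.
Proof.
move=> uS uA uB hF hS.
have pickF : forall x y, F x y =
    \sum_(u <- Sa) \sum_(v <- Sb) (if (u == x) && (v == y) then F u v else 0).
  move=> x y; rewrite (sum_ind (x := x)) //; last first.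
    by move=> u /negbTE hu; rewrite big1 // => v _; rewrite hu.
  case: ifP => hx; last by apply/eqP; apply: contraFT hx => /hF /andP [].
  under eq_bigr => v _ do rewrite eqxx /=.
  rewrite (sum_ind (F := fun v => if v == y then F x v else 0) (x := y)) //; last first.
    by move=> v /negbTE ->.
  rewrite eqxx; case: ifP => // hy; apply/eqP; apply: contraFT hy => /hF /andP [_ ->] //.
have step1 : forall w, \sum_(k < (size w).+1) F (take k w) (drop k w) =
    \sum_(u <- Sa) \sum_(v <- Sb) (if w == u ++ v then F u v else 0).
  move=> w; rewrite (eq_bigr _ (fun k _ => pickF _ _)) exchange_big /=.
  apply: eq_bigr => u _; rewrite exchange_big /=; apply: eq_bigr => v _.
  rewrite -big_mkcond /=.
  rewrite (eq_bigl (fun k : 'I_(size w).+1 => (w == u ++ v) && (k == size u :> nat))); last first.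
    by move=> k; rewrite eq_sym [v == _]eq_sym -take_drop_eq // -ltnS.
  case: eqP => [e|_]; last by rewrite big_pred0.
  rewrite (@big_ord1_eq _ _ _ (fun _ => F u v)) e size_cat ltnS leq_addr //.
rewrite (eq_bigr _ (fun w _ => step1 w)) exchange_big /=.
apply: eq_bigr => u _; rewrite exchange_big /=; apply: eq_bigr => v _.
rewrite (sum_ind (F := fun w => if w == u ++ v then F u v else 0) (x := u ++ v)) //; last first.
  by move=> w /negbTE ->.
rewrite eqxx; case: ifP => // hx; apply/esym/eqP; apply: contraFT hx => /hF /andP [h1 h2].
exact: hS.
Qed.

End Expand.
Section Mat.
Variables (gT : finGroupType) (C : numClosedFieldType).
Local Notation k := #|gT|.
Local Notation term := (term gT).
Local Notation word := (word gT).
Local Notation M := 'M[C]_k.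
Implicit Types (t a b f : term) (w u v : word).

Definition evw (A : nat -> gT -> M) w : M := eval A (wt w).

Lemma evw_nil A : evw A [::] = 1%:M. Proof. by rewrite /evw /= rmorph1. Qed.
Lemma evw_cons A l w : evw A (l :: w) = eval A (TV l) *m evw A w. Proof. by []. Qed.
Lemma evw_cat A u v : evw A (u ++ v) = evw A u *m evw A v.
Proof.
elim: u => [|l u IH]; first by rewrite evw_nil mul1mx.
by rewrite cat_cons !evw_cons IH mulmxA.
Qed.

Lemma expand A t S : uniq S -> {subset supp t <= S} ->
  eval A t = \sum_(w <- S) ratr (coef t w) *: evw A w.
Proof.
elim: t S => [c|l|a IHa b IHb|a IHa b IHb] S uS hS.
- rewrite (sum_ind (x := [::])) //; last by case=> // ? ? _; rewrite /= rmorph0 scale0r.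
  by rewrite hS ?inE //= evw_nil scalemx1.
- rewrite (sum_ind (x := [:: l])) //; last first.
    by move=> w /negbTE /= ->; rewrite rmorph0 scale0r.
  by rewrite hS ?inE //= eqxx rmorph1 scale1r /evw /= rmorph1 mulmx1.
- rewrite /= (IHa S) ?(IHb S) // -?big_split /=; last 2 first.
  + by move=> w hw; apply: hS; rewrite /= mem_cat hw orbT.
  + by move=> w hw; apply: hS; rewrite /= mem_cat hw.
  by apply: eq_bigr => w _; rewrite rmorphD scalerDl.
- have hA := undup_uniq (supp a); have hB := undup_uniq (supp b).
  rewrite /= (IHa _ hA) ?(IHb _ hB); last 2 first.
  + by move=> w; rewrite mem_undup.
  + by move=> w; rewrite mem_undup.
  rewrite mulmx_suml.
  transitivity (\sum_(u <- undup (supp a)) \sum_(v <- undup (supp b))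
     ((ratr (coef a u) * ratr (coef b v)) *: evw A (u ++ v))).
    apply: eq_bigr => u _; rewrite mulmx_sumr; apply: eq_bigr => v _.
    by rewrite -scalemxAl -scalemxAr scalerA evw_cat.
  rewrite -(reindex (S := S)) //; last first.
  + move=> u v; rewrite !mem_undup => hu hv; apply: hS.
    exact: (allpairs_f (fun x y => x ++ y) hu hv).
  + move=> u v; apply: contraR; rewrite negb_and !mem_undup => /orP [/notin_supp -> | /notin_supp ->].
      by rewrite rmorph0 mul0r scale0r.
    by rewrite rmorph0 mulr0 scale0r.
  apply: eq_bigr => w _; rewrite rmorph_sum scaler_suml; apply: eq_bigr => i _.
  by rewrite rmorphM cat_take_drop.
Qed.

Lemma eval_feq (A : nat -> gT -> M) (s : term) t : feq s t -> eval A s = eval A t.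
Proof.
move=> e; have uS := undup_uniq (supp s ++ supp t).
rewrite (expand A uS) ?(expand A (t := t) uS); last 2 first.
- by move=> w hw; rewrite mem_undup mem_cat hw orbT.
- by move=> w hw; rewrite mem_undup mem_cat hw.
by apply: eq_bigr => w _; rewrite e.
Qed.

Definition suppM g (X : M) :=
  forall a b : 'I_k, enum_val b != (enum_val a * g)%g -> X a b = 0.

Lemma gradedP g (X : M) : graded_comp g X <-> suppM g X.
Proof.
split => [[d ->] a b hb|h].
  by rewrite mul_diag_mx !mxE (negbTE hb) mulr0.
exists (\row_a X a (enum_rank (enum_val a * g)%g)); apply/matrixP => a b.
rewrite mul_diag_mx !mxE; case: eqP => [<-|/eqP hb]; last by rewrite mulr0 h.
by rewrite enum_valK mulr1.
Qed.

Lemma suppM0 g : suppM g 0. Proof. by move=> a b _; rewrite mxE. Qed.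
Lemma suppMD g X Y : suppM g X -> suppM g Y -> suppM g (X + Y).
Proof. by move=> hX hY a b hb; rewrite mxE hX ?hY ?addr0. Qed.
Lemma suppMZ g c X : suppM g X -> suppM g (c *: X).
Proof. by move=> hX a b hb; rewrite mxE hX ?mulr0. Qed.
Lemma suppMM g h X Y : suppM g X -> suppM h Y -> suppM (g * h)%g (X *m Y).
Proof.
move=> hX hY a c hc; rewrite mxE big1 // => b _.
have [e1|n1] := eqVneq (enum_val b) (enum_val a * g)%g; last by rewrite hX ?mul0r.
rewrite hY ?mulr0 //; apply: contra hc => /eqP ->; by rewrite e1 mulgA.
Qed.
Lemma suppMT g X : suppM g X -> suppM g^-1 X^T.
Proof.
move=> hX a b hb; rewrite mxE hX //; apply: contra hb => /eqP ->; by rewrite mulgK.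
Qed.
Lemma suppM1 c : suppM 1 (c%:M : M).
Proof.
move=> a b hb; rewrite mxE; case: eqP => [e|]; last by rewrite mulr0n.
by move: hb; rewrite e mulg1 eqxx.
Qed.
Lemma suppM_sum g (I : Type) (r : seq I) (F : I -> M) :
  (forall i, suppM g (F i)) -> suppM g (\sum_(i <- r) F i).
Proof.
move=> h; elim: r => [|i r IH]; first by rewrite big_nil; exact: suppM0.
by rewrite big_cons; apply: suppMD.
Qed.

Definition gradedA (A : nat -> gT -> M) := forall i g, graded_comp g (A i g).

Lemma suppM_TV A l : gradedA A -> suppM (ldeg l) (eval A (TV l)).
Proof.
move=> hA; case: l => [[i g] []] /=; apply/gradedP => //.
by apply/gradedP/suppMT/gradedP.
Qed.

Lemma suppM_evw A w : gradedA A -> suppM (wdeg w) (evw A w).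
Proof.
move=> hA; elim: w => [|l w IH]; first by rewrite evw_nil; exact: suppM1.
by rewrite evw_cons; apply: suppMM => //; exact: suppM_TV.
Qed.

Lemma suppM_hom A t g : gradedA A -> homogeneous g t -> suppM g (eval A t).
Proof.
move=> hA ht; rewrite (expand A (undup_uniq (supp t))); last by move=> w; rewrite mem_undup.
apply: suppM_sum => w.
have [e|ne] := eqVneq (coef t w) 0; first by rewrite e rmorph0 scale0r; exact: suppM0.
by apply: suppMZ; rewrite -(ht w ne); exact: suppM_evw.
Qed.

Lemma eval_tstar (A : nat -> gT -> M) t : eval A (tstar t) = (eval A t)^T.
Proof.
elim: t => [c|[[i g] []]|a IHa b IHb|a IHa b IHb] /=.
- by rewrite tr_scalar_mx.
- by rewrite trmxK.
- by [].
- by rewrite IHa IHb linearD.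
- by rewrite IHa IHb trmx_mul.
Qed.

Lemma eval_tsubst (A : nat -> gT -> M) s t : eval A (tsubst s t) = eval (fun i g => eval A (s i g)) t.
Proof.
elim: t => [c|[[i g] []]|a IHa b IHb|a IHa b IHb] //=.
- by rewrite eval_tstar.
- by rewrite IHa IHb.
- by rewrite IHa IHb.
Qed.

Lemma Pmx1 : Pmx C (1 : gT) = 1%:M.
Proof. by apply/matrixP => a b; rewrite !mxE mulg1 (inj_eq enum_val_inj) eq_sym. Qed.

Lemma identity_ideal : is_TStar_ideal (@gstar_identity gT C).
Proof.
split; first by move=> f h e hf A hA; rewrite -(eval_feq A e); exact: hf.
split; first by move=> A _; rewrite /= rmorph0 raddf0.
split; first by move=> f h hf hh A hA; rewrite /= hf // hh // addr0.
split; first by move=> f h hf; split => A hA; rewrite /= hf // ?mulmx0 ?mul0mx.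
split; first by move=> f hf A hA; rewrite eval_tstar hf // trmx0.
move=> s gs f hf A hA; rewrite eval_tsubst; apply: hf => i g.
by apply/gradedP; apply: suppM_hom.
Qed.

Lemma gens_identity t : gens7 t -> gstar_identity C t.
Proof.
case=> [[i [j ->]]|[i ->]] A hA /=.
  have [d1 ->] := hA i 1%g; have [d2 ->] := hA j 1%g.
  by rewrite Pmx1 !mulmx1 diag_mxC rmorphN1 mul_scalar_mx scaleN1r subrr.
have [d1 ->] := hA i 1%g.
by rewrite Pmx1 !mulmx1 tr_diag_mx rmorphN1 mul_scalar_mx scaleN1r subrr.
Qed.

End Mat.
Section Complete.
Variables (gT : finGroupType) (C : numClosedFieldType).
Local Notation k := #|gT|.
Local Notation term := (term gT).
Local Notation word := (word gT).
Local Notation M := 'M[C]_k.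

Definition Atau (tau : edge gT -> C) : nat -> gT -> M :=
  fun i g => diag_mx (\row_(a < k) tau (i, g, enum_val a)) *m Pmx C g.

Lemma Atau_graded tau : gradedA (Atau tau).
Proof. by move=> i g; exists (\row_(a < k) tau (i, g, enum_val a)). Qed.

Lemma TV_entry tau l (a c : 'I_k) :
  eval (Atau tau) (TV l) a c =
  (enum_val c == step (enum_val a) l)%:R * tau (ledge (enum_val a) l).
Proof.
case: l => [[i g] []] /=.
  rewrite mxE /Atau mul_diag_mx !mxE /step /=.
  have -> : (enum_val a == enum_val c * g)%g = (enum_val c == enum_val a * g^-1)%g.
    by apply/eqP/eqP => ->; rewrite ?mulgK ?mulgKV.
  by case: eqP => [->|_]; rewrite ?mulr1 ?mul1r ?mulr0 ?mul0r.
by rewrite /Atau mul_diag_mx !mxE /step /= mulrC.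
Qed.

Lemma sum_pick1 (F : 'I_k -> C) y :
  \sum_(c < k) (enum_val c == y)%:R * F c = F (enum_rank y).
Proof.
rewrite (bigD1 (enum_rank y)) //= enum_rankK eqxx mul1r big1 ?addr0 // => c hc.
case: eqP => [e|]; last by rewrite mul0r.
by move: hc; rewrite -e enum_valK eqxx.
Qed.

Lemma evw_entry tau w (a b : 'I_k) :
  evw (Atau tau) w a b =
  (enum_val b == (enum_val a * wdeg w)%g)%:R * \prod_(e <- edges (enum_val a) w) tau e.
Proof.
elim: w a => [|l w IH] a.
  by rewrite evw_nil /= big_nil mulr1 mxE mulg1 (inj_eq enum_val_inj) eq_sym.
rewrite evw_cons mxE.
rewrite (eq_bigr (fun c => (enum_val c == step (enum_val a) l)%:R *
   (tau (ledge (enum_val a) l) * evw (Atau tau) w c b))); last first.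
  by move=> c _; rewrite TV_entry mulrA.
rewrite sum_pick1 IH enum_rankK /= big_cons /step mulgA.
by rewrite mulrCA.
Qed.

Lemma class_sum (f : term) : gstar_identity C f -> forall w0,
  \sum_(w <- undup (supp f) | perm_eq (edges 1%g w) (edges 1%g w0)) coef f w = 0.
Proof.
move=> hf w0; set S := undup (supp f).
pose L := [seq (ratr (coef f w) * ((wdeg w0 == wdeg w)%:R : C), edges 1%g w) | w <- S].
have hv : forall tau : edge gT -> C, \sum_(j <- L) j.1 * \prod_(y <- j.2) tau y = 0.
  move=> tau; have := hf _ (Atau_graded tau).
  rewrite (expand _ (undup_uniq (supp f))); last by move=> w; rewrite mem_undup.
  move/matrixP => /(_ (enum_rank 1%g) (enum_rank (wdeg w0))).
  rewrite summxE !mxE => h; apply: etrans h.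
  rewrite big_map; apply: eq_bigr => w _.
  by rewrite mxE evw_entry !enum_rankK mul1g /= mulrA.
have := indep (leqnn (meas L)) hv (edges 1%g w0).
rewrite big_map => h.
have : ratr (\sum_(w <- S | perm_eq (edges 1%g w) (edges 1%g w0)) coef f w) = 0 :> C.
  rewrite rmorph_sum; apply: etrans h; apply: eq_bigr => w hw /=.
  by have [_ [-> _]] := main_combi (erefl _) hw; rewrite eqxx mulr1.
by move/eqP; rewrite fmorph_eq0 => /eqP.
Qed.

Lemma complete (f : term) : gstar_identity C f -> inJ f.
Proof.
move=> hf.
set S := undup (supp f).
pose same (x w : word) := perm_eq (edges 1%g x) (edges 1%g w).
pose rep (w : word) := head w [seq x <- S | same x w].
have rep_in : forall w, w \in S -> (rep w \in S) && same (rep w) w.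
  move=> w hw; have : rep w \in [seq x <- S | same x w].
    rewrite /rep; case e: [seq x <- S | same x w] => [|y s]; last by rewrite inE eqxx.
    by move: (mem_filter (same^~ w) w S); rewrite e hw /same perm_refl.
  by rewrite mem_filter andbC.
have rep_eq : forall w w', w \in S -> same w w' -> rep w = rep w'.
  move=> w w' hw hs; rewrite /rep.
  rewrite (eq_filter (a2 := same^~ w')); last first.
    move=> x; rewrite /same; apply/idP/idP => h; first exact: perm_trans h hs.
    by apply: perm_trans h _; rewrite perm_sym.
  case e: [seq x <- S | same x w'] => [|y s] //.
  by move: (mem_filter (same^~ w') w S); rewrite e hw hs.
pose gs := foldr (fun w t => TAdd (TMul (TC gT (coef f w)) (tsub (wt w) (wt (rep w)))) t) (TC gT 0).
have inJ_gs : forall L, {subset L <= S} -> inJ (gs L).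
  elim => [|w L IH] hL; first exact: inJ_0.
  apply: inJ_add; last by apply: IH => x hx; apply: hL; rewrite inE hx orbT.
  apply: inJ_mull; have hw : w \in S by apply: hL; rewrite inE eqxx.
  have /andP [_ hs] := rep_in w hw.
  have hp : perm_eq (edges 1%g w) (edges 1%g (rep w)) by rewrite perm_sym; exact: hs.
  exact: (main_combi (erefl _) hp).1.
have coef_gs : forall L u, coef (gs L) u =
    \sum_(w <- L) coef f w * ((u == w)%:R - (u == rep w)%:R).
  elim => [|w L IH] u; first by rewrite big_nil; case: u.
  transitivity (coef (TMul (TC gT (coef f w)) (tsub (wt w) (wt (rep w)))) u + coef (gs L) u).
    by [].
  by rewrite coef_scal coef_tsub !ind_wt IH big_cons.
apply: (inJ_feq _ (inJ_gs S (fun x h => h))).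
move=> u; rewrite coef_gs.
under eq_bigr => w _ do rewrite mulrBr.
rewrite sumrB.
have h1 : \sum_(w <- S) coef f w * (u == w)%:R = coef f u.
  rewrite (sum_ind (x := u)) ?undup_uniq //; last first.
    by move=> w hw; rewrite eq_sym (negbTE hw) mulr0.
  case: ifP => hu; first by rewrite eqxx mulr1.
  by rewrite notin_supp // -mem_undup hu.
have h2 : \sum_(w <- S) coef f w * (u == rep w)%:R = 0.
  case hh: (has (fun w => rep w == u) S); last first.
    rewrite big_seq big1 // => w hw; have := hasPn (negbT hh) w hw.
    by rewrite eq_sym => /negbTE ->; rewrite mulr0.
  have [w1 hw1 /eqP hr] := hasP hh.
  have /andP [huS hsu] := rep_in w1 hw1; rewrite hr in huS hsu.
  apply: etrans (class_sum hf u).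
  rewrite [RHS]big_mkcond [LHS]big_seq [RHS]big_seq; apply: eq_bigr => w hw.
  have -> : (u == rep w) = same w u.
    apply/eqP/idP => [->|hs].
      by have /andP [_] := rep_in w hw; rewrite /same perm_sym.
    by rewrite (rep_eq _ _ hw hs) (rep_eq _ _ huS hsu) hr.
  by rewrite /same; case: ifP; rewrite ?mulr1 ?mulr0.
by rewrite h1 h2 subr0.
Qed.

End Complete.

Theorem mainTheorem7 (gT : finGroupType) (C : numClosedFieldType) (f : term gT) :
  gstar_identity C f <-> in_TStar_ideal_gen (@gens7 gT) f.
Proof.
split; first exact: complete.
by move=> h; apply: h; [exact: identity_ideal | exact: gens_identity].
Qed.
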